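(* Let $M,N\in\Lambda^{001}$. If for every $d\in\mathbf N$ there exists a $d$-positive resource term $s_d\in\mathcal T(M)\cap\mathcal T(N)$, then $M=N$.
   Context: $\Lambda^{001}$: possibly infinite λ-terms (trees of variables, abstractions $\lambda x.M$ and applications $(M)N$) whose infinite branches all enter infinitely often the argument position $N$ of an application, up to α-equivalence. Resource terms: $s::=x\mid\lambda x.s\mid\langle s\rangle\bar t$, with $\bar t=[t_1,\dots,t_n]$ a finite multiset of resource terms. Taylor approximation $\ltimes$ is inductive: $x\ltimes x$; $s\ltimes M\Rightarrow\lambda x.s\ltimes\lambda x.M$; ($s\ltimes M$ and $t_i\ltimes N$ for all $i$) $\Rightarrow\langle s\rangle[t_1,\dots,t_n]\ltimes(M)N$; $\mathcal T(M)=\{s : s\ltimes M\}$. $d$-positive resource terms: every resource term is 0-positive; for $d\ge1$, the $d$-positive terms are generated by $s::=x\mid\lambda x.s\mid\langle s\rangle\bar t$ where $s$ is $d$-positive and $\bar t$ is a non-empty multiset of $(d-1)$-positive terms. *)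

(* Defs.v *)
(* Possibly infinite lambda-terms as labelled trees over
   positions, with de Bruijn indices (so alpha-equivalence is built in). *)
From Stdlib Require Import List Arith.
Import ListNotations.

Inductive dir : Type := Body | Fun | Arg.

Inductive label : Type := LVar (n : nat) | LLam | LApp.

Definition tree : Type := list dir -> option label.

Definition wf_tree (t : tree) : Prop :=
  t [] <> None /\
  forall p : list dir,
    match t p with
    | None => forall d, t (p ++ [d]) = None
    | Some (LVar _) => forall d, t (p ++ [d]) = None
    | Some LLam => t (p ++ [Body]) <> None /\ t (p ++ [Fun]) = None
                   /\ t (p ++ [Arg]) = None
    | Some LApp => t (p ++ [Body]) = None /\ t (p ++ [Fun]) <> None
                   /\ t (p ++ [Arg]) <> None
    end.

Fixpoint prefix (f : nat -> dir) (n : nat) : list dir :=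
  match n with
  | 0 => []
  | S k => prefix f k ++ [f k]
  end.

Definition infinite_branch (t : tree) (f : nat -> dir) : Prop :=
  forall n, t (prefix f n) <> None.

Definition Lambda001 (t : tree) : Prop :=
  wf_tree t /\
  forall f, infinite_branch t f -> forall k, exists n, k <= n /\ f n = Arg.

(* Resource terms (de Bruijn); the finite multiset of arguments is a list
   (all notions below are invariant under permutation of it). *)
Inductive rterm : Type :=
| rvar (n : nat)
| rlam (s : rterm)
| rapp (s : rterm) (ts : list rterm).

Inductive approx (t : tree) : list dir -> rterm -> Prop :=
| approx_var p n : t p = Some (LVar n) -> approx t p (rvar n)
| approx_lam p s : t p = Some LLam -> approx t (p ++ [Body]) s ->
                   approx t p (rlam s)
| approx_app p s ts : t p = Some LApp -> approx t (p ++ [Fun]) s ->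
                   (forall u, In u ts -> approx t (p ++ [Arg]) u) ->
                   approx t p (rapp s ts).

Definition in_taylor (s : rterm) (M : tree) : Prop := approx M [] s.

Inductive dpositive : nat -> rterm -> Prop :=
| dpos_zero s : dpositive 0 s
| dpos_var d n : dpositive (S d) (rvar n)
| dpos_lam d s : dpositive (S d) s -> dpositive (S d) (rlam s)
| dpos_app d s ts : dpositive (S d) s -> ts <> [] ->
                    (forall u, In u ts -> dpositive d u) ->
                    dpositive (S d) (rapp s ts).

(* Main.v *)
Require Import Defs.
From Stdlib Require Import List Arith Lia.
Import ListNotations.

Fixpoint nargs (p : list dir) : nat :=
  match p with
  | [] => 0
  | Arg :: r => S (nargs r)
  | _ :: r => nargs r
  end.

Lemma none_ext (t : tree) : wf_tree t -> forall r q, t q = None -> t (q ++ r) = None.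
Proof.
  intros [_ W] r. induction r as [|d r IH]; intros q Hq.
  - rewrite app_nil_r; exact Hq.
  - replace (q ++ d :: r) with ((q ++ [d]) ++ r) by (rewrite <- app_assoc; reflexivity).
    apply IH. specialize (W q). rewrite Hq in W. apply W.
Qed.

Lemma lab (t : tree) q u :
  approx t q u -> t q = match u with rvar n => Some (LVar n) | rlam _ => Some LLam
                                | rapp _ _ => Some LApp end.
Proof. intros H; inversion H; subst; assumption. Qed.

Lemma key (M N : tree) : wf_tree M -> wf_tree N ->
  forall p d q u, dpositive d u -> approx M q u -> approx N q u -> nargs p < d ->
  M (q ++ p) = N (q ++ p).
Proof.
  intros WM WN p. induction p as [|a p IH]; intros d q u Hd HM HN Hc.
  - rewrite app_nil_r. rewrite (lab _ _ _ HM), (lab _ _ _ HN). reflexivity.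
  - assert (E : q ++ a :: p = (q ++ [a]) ++ p) by (rewrite <- app_assoc; reflexivity).
    rewrite E.
    assert (Both : M (q ++ [a]) = None -> N (q ++ [a]) = None ->
                   M ((q ++ [a]) ++ p) = N ((q ++ [a]) ++ p)).
    { intros h1 h2. rewrite (none_ext _ WM p _ h1), (none_ext _ WN p _ h2). reflexivity. }
    pose proof (proj2 WM q) as WMq. pose proof (proj2 WN q) as WNq.
    pose proof (lab _ _ _ HM) as LM. pose proof (lab _ _ _ HN) as LN.
    destruct u as [n|s|s ts].
    + rewrite LM in WMq. rewrite LN in WNq. apply Both; auto.
    + rewrite LM in WMq. rewrite LN in WNq.
      destruct a.
      * inversion HM; subst. inversion HN; subst.
        destruct d as [|d]; [simpl in Hc; lia|].
        inversion Hd; subst.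
        eapply IH with (d := S d) (u := s); eauto.
      * apply Both; tauto.
      * apply Both; tauto.
    + rewrite LM in WMq. rewrite LN in WNq.
      destruct a.
      * apply Both; tauto.
      * inversion HM; subst. inversion HN; subst.
        destruct d as [|d]; [simpl in Hc; lia|].
        inversion Hd; subst.
        eapply IH with (d := S d) (u := s); eauto.
      * inversion HM; subst. inversion HN; subst.
        destruct d as [|d]; [simpl in Hc; lia|].
        inversion Hd; subst.
        destruct ts as [|u ts]; [congruence|].
        eapply IH with (d := d) (u := u); simpl in *; eauto; lia.
Qed.

Theorem mainTheorem19 (M N : tree) :
  Lambda001 M -> Lambda001 N ->
  (forall d : nat, exists s : rterm,
     dpositive d s /\ in_taylor s M /\ in_taylor s N) ->
  forall p : list dir, M p = N p.
Proof.
  intros [WM _] [WN _] H p.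
  destruct (H (S (nargs p))) as [s [Hd [HM HN]]].
  change p with ([] ++ p).
  eapply key; eauto.
Qed.
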